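(* Let $d\ge 2$ be an integer, let $\alpha_0,\alpha_{d+1},\beta_0,\beta_{d+1}\in\mathbb R$ and $\mathbf a,\mathbf b\in\mathbb R^d$. Define the symmetric $(d+1)\times(d+1)$ matrices $$A=\begin{pmatrix}\alpha_0\,\mathrm{Id}_d & -2\mathbf a\\ -2\mathbf a^T & 2\alpha_{d+1}\end{pmatrix},\qquad B=\begin{pmatrix}\beta_0\,\mathrm{Id}_d & -2\mathbf b\\ -2\mathbf b^T & 2\beta_{d+1}\end{pmatrix},$$ where $\mathrm{Id}_d$ is the $d\times d$ identity matrix, and assume that $A$ is positive definite. Set $$\Delta=\big(4\,\mathbf a^T\mathbf b-(\beta_{d+1}\alpha_0+\beta_0\alpha_{d+1})\big)^2-4\big(2\Vert\mathbf a\Vert^2-\alpha_0\alpha_{d+1}\big)\big(2\Vert\mathbf b\Vert^2-\beta_0\beta_{d+1}\big).$$ Then $\Delta\ge 0$, $4\Vert\mathbf a\Vert^2-2\alpha_0\alpha_{d+1}\neq 0$, and, with $$\lambda_\pm=\frac{\big(-4\,\mathbf a^T\mathbf b+(\beta_{d+1}\alpha_0+\beta_0\alpha_{d+1})\big)\pm\sqrt{\Delta}}{4\Vert\mathbf a\Vert^2-2\alpha_0\alpha_{d+1}},$$ one has $$\max_{\mathbf z\in\mathbb R^{d+1}\setminus\{0\}}\frac{\vert\mathbf z^TB\mathbf z\vert}{\mathbf z^TA\mathbf z}=\rho\big(A^{-1/2}BA^{-1/2}\big)=\max\Big(\frac{\vert\beta_0\vert}{\alpha_0},\ \vert\lambda_+\vert,\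 \vert\lambda_-\vert\Big),$$ where $\rho(\cdot)$ denotes the spectral radius and $A^{-1/2}$ is the inverse of the symmetric positive definite square root of $A$.
   Context: $\Vert\cdot\Vert$ is the Euclidean norm on $\mathbb R^d$. This computation is used to determine the blending coefficients guaranteeing positivity of internal energy in a bound-preserving scheme for the Euler equations, via the ratio $\vert(\Delta\hat{\mathbf f})^T\psi(\mathbf w)\vert/(\mathbf u^{\star})^T\psi(\mathbf w)$ with $\psi(\mathbf w)=(\tfrac{\Vert\mathbf w\Vert^2}{2},-\mathbf w,1)$, after homogenizing $\mathbf w\mapsto\mathbf w/w_{d+1}$ and setting $\mathbf z=(\mathbf w,w_{d+1})$. *)

(* Defs.v *)
From HB Require Import structures.
From mathcomp Require Import all_boot all_order all_algebra.
From mathcomp Require Import complex.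
Set Implicit Arguments. Unset Strict Implicit. Unset Printing Implicit Defensive.
Import Order.TTheory GRing.Theory Num.Theory.
Local Open Scope ring_scope.

Definition dotv (R : rcfType) (d : nat) (u v : 'cV[R]_d) : R :=
  \sum_(i < d) u i 0 * v i 0.

Definition qform (R : rcfType) (n : nat) (M : 'M[R]_n) (z : 'cV[R]_n) : R :=
  (z^T *m M *m z) 0 0.

Definition posdef (R : rcfType) (n : nat) (M : 'M[R]_n) : Prop :=
  M^T = M /\ forall z : 'cV[R]_n, z != 0 -> 0 < qform M z.

Definition is_spd_sqrt (R : rcfType) (n : nat) (A S : 'M[R]_n) : Prop :=
  posdef S /\ S *m S = A.

Definition blockM (R : rcfType) (d : nat) (c0 c1 : R) (v : 'cV[R]_d)
  : 'M[R]_(d + 1) :=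
  block_mx (c0%:M) (- (2 : R) *: v) (- (2 : R) *: v^T) ((2 * c1)%:M).

Definition is_max_ratio (R : rcfType) (n : nat) (A B : 'M[R]_n) (m : R) : Prop :=
  (exists2 z : 'cV[R]_n, z != 0 & `|qform B z| / qform A z = m) /\
  (forall z : 'cV[R]_n, z != 0 -> `|qform B z| / qform A z <= m).

Definition is_spectral_radius (R : rcfType) (n : nat) (M : 'M[R]_n) (r : R)
  : Prop :=
  let MC := map_mx (fun x : R => (x%:C)%C) M in
  (exists2 l : R[i], eigenvalue MC l & `|l| = (r%:C)%C) /\
  (forall l : R[i], eigenvalue MC l -> `|l| <= (r%:C)%C).

(* Main.v *)
Require Import Defs.
From HB Require Import structures.
From mathcomp Require Import all_boot all_order all_algebra.
From mathcomp Require Import complex.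
From mathcomp.algebra_tactics Require Import ring lra.
Import Order.TTheory GRing.Theory Num.Theory.
Local Open Scope ring_scope.

Set Implicit Arguments. Unset Strict Implicit. Unset Printing Implicit Defensive.

Section Gen.
Variable K : comNzRingType.

Definition dotK n (u v : 'cV[K]_n) := (u^T *m v) 0 0.

Definition blockK d (c0 c1 : K) (v : 'cV[K]_d) : 'M[K]_(d + 1) :=
  block_mx (c0%:M) (- (2 : K) *: v) (- (2 : K) *: v^T) ((2 * c1)%:M).

Definition genblock d (p q r w : K) (a : 'cV[K]_d) : 'M[K]_(d + 1) :=
  block_mx (p%:M + q *: (a *m a^T)) (r *: a) (r *: a^T) (w%:M).

Lemma mxcol_row_mul m n (A : 'M[K]_(m, 1)) (B : 'M[K]_(1, n)) i j :
  (A *m B) i j = A i 0 * B 0 j.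
Proof. by rewrite mxE big_ord1. Qed.

Lemma dotKC n (u v : 'cV[K]_n) : dotK u v = dotK v u.
Proof.
rewrite /dotK. have -> : v^T *m u = (u^T *m v)^T by rewrite trmx_mul trmxK. by rewrite [RHS]mxE.
Qed.

Lemma dotKDl n (u v w : 'cV[K]_n) : dotK (u + v) w = dotK u w + dotK v w.
Proof. by rewrite /dotK linearD /= mulmxDl mxE. Qed.

Lemma dotKZl n k (u w : 'cV[K]_n) : dotK (k *: u) w = k * dotK u w.
Proof. by rewrite /dotK linearZ /= -scalemxAl mxE. Qed.

Lemma dotKNl n (u w : 'cV[K]_n) : dotK (- u) w = - dotK u w.
Proof. by rewrite -scaleN1r dotKZl mulN1r. Qed.

Lemma dotKDr n (u v w : 'cV[K]_n) : dotK w (u + v) = dotK w u + dotK w v.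
Proof. by rewrite dotKC dotKDl !(dotKC w). Qed.

Lemma dotKZr n k (u w : 'cV[K]_n) : dotK w (k *: u) = k * dotK w u.
Proof. by rewrite dotKC dotKZl dotKC. Qed.

Lemma dotKNr n (u w : 'cV[K]_n) : dotK w (- u) = - dotK w u.
Proof. by rewrite dotKC dotKNl dotKC. Qed.

Lemma dotK_expand n (a b : 'cV[K]_n) l :
  dotK (b - l *: a) (b - l *: a) = dotK b b - 2 * l * dotK a b + l ^+ 2 * dotK a a.
Proof.
rewrite !(dotKDl, dotKDr, dotKNl, dotKNr, dotKZl, dotKZr) (dotKC b a). ring.
Qed.

Lemma mx11E (A : 'M[K]_1) : A = (A 0 0)%:M.
Proof. exact: mx11_scalar. Qed.

Lemma row_blockK d c0 c1 (v : 'cV[K]_d) (w : 'rV[K]_d) (t : 'rV[K]_1) :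
  row_mx w t *m blockK c0 c1 v =
  row_mx (c0 *: w - (2 * t 0 0) *: v^T)
         ((- 2 * (w *m v) 0 0 + 2 * c1 * t 0 0)%:M).
Proof.
rewrite /blockK mul_row_block; congr row_mx.
  rewrite mul_mx_scalar [t]mx11E mul_scalar_mx scalerA mxE eqxx mulr1n.
  by rewrite mulrN scaleNr; congr (_ - _ *: _); exact: mulrC.
rewrite -(scalemxAr (-2) w v) mul_mx_scalar; apply/matrixP => i j; rewrite !ord1 !mxE eqxx mulr1n; by [].
Qed.

Lemma mxDE m n (A B : 'M[K]_(m, n)) i j : (A + B) i j = A i j + B i j.
Proof. by rewrite mxE. Qed.
Lemma mxZE m n k (A : 'M[K]_(m, n)) i j : (k *: A) i j = k * A i j.
Proof. by rewrite mxE. Qed.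

Lemma qform_genblock d p q r w (a u : 'cV[K]_d) (t : 'cV[K]_1) :
  ((col_mx u t)^T *m genblock p q r w a *m col_mx u t) 0 0 =
  p * dotK u u + q * dotK a u ^+ 2 + 2 * r * t 0 0 * dotK a u + w * t 0 0 ^+ 2.
Proof.
rewrite tr_col_mx /genblock mul_row_block mul_row_col.
have E1 : u^T *m (p%:M + q *: (a *m a^T)) *m u =
   p *: (u^T *m u) + q *: ((u^T *m a) *m (a^T *m u)).
  by rewrite mulmxDr mulmxDl mul_mx_scalar -scalemxAl -scalemxAr -scalemxAl !mulmxA.
have E2 : t^T *m (r *: a^T) *m u = r *: (t^T *m (a^T *m u)).
  by rewrite -scalemxAr -scalemxAl mulmxA.
have E3 : u^T *m (r *: a) *m t = r *: ((u^T *m a) *m t).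
  by rewrite -scalemxAr -scalemxAl.
have E4 : t^T *m w%:M *m t = w *: (t^T *m t).
  by rewrite mul_mx_scalar -scalemxAl.
rewrite !mulmxDl E1 E2 E3 E4 !mxDE !mxZE !mxcol_row_mul.
rewrite -/(dotK u u) -/(dotK a u) -/(dotK u a) (dotKC u a) [t^T 0 0]mxE.
ring.
Qed.

Lemma aTa d (a : 'cV[K]_d) : a^T *m a = (dotK a a)%:M.
Proof. exact: mx11E. Qed.

Lemma aaTa d (a : 'cV[K]_d) : a *m a^T *m a = dotK a a *: a.
Proof. by rewrite -mulmxA aTa mul_mx_scalar. Qed.

Lemma aTaaT d (a : 'cV[K]_d) : a^T *m (a *m a^T) = dotK a a *: a^T.
Proof. by rewrite mulmxA aTa mul_scalar_mx. Qed.

Lemma aaTaaT d (a : 'cV[K]_d) : a *m a^T *m (a *m a^T) = dotK a a *: (a *m a^T).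
Proof. by rewrite mulmxA aaTa -scalemxAl. Qed.

Lemma genblock_sq d p q r w (a : 'cV[K]_d) :
  genblock p q r w a *m genblock p q r w a =
  genblock (p * p) (2 * p * q + q * q * dotK a a + r * r)
           (r * (p + q * dotK a a + w)) (r * r * dotK a a + w * w) a.
Proof.
rewrite /genblock mulmx_block.
do ![rewrite mulmxDl | rewrite mulmxDr | rewrite mul_scalar_mx | rewrite mul_mx_scalar
     | rewrite -scalemxAl | rewrite -scalemxAr].
rewrite ?(aaTaaT, aaTa, aTaaT, aTa, mul_scalar_mx, mul_mx_scalar).
congr block_mx; apply/matrixP => i j; rewrite !mxE ?big_ord1 ?ord1 ?mxE; ring.
Qed.

Lemma tr_genblock d p q r w (a : 'cV[K]_d) :
  (genblock p q r w a)^T = genblock p q r w a.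
Proof.
rewrite /genblock tr_block_mx !linearD !linearZ /= trmx_mul !trmxK !tr_scalar_mx //.
Qed.

Lemma blockK_gen d c0 c1 (v : 'cV[K]_d) :
  blockK c0 c1 v = genblock c0 0 (-2) (2 * c1) v.
Proof. by rewrite /blockK /genblock scale0r addr0. Qed.

Lemma blockK_lin d c0 c1 v c0' c1' v' (l : K) :
  blockK c0 c1 v - l *: blockK c0' c1' v' =
  blockK (c0 - l * c0') (c1 - l * c1') (v - l *: v') :> 'M[K]_(d + 1).
Proof.
rewrite /blockK scale_block_mx opp_block_mx add_block_mx.
congr block_mx; apply/matrixP => i j; rewrite !mxE; ring.
Qed.

End Gen.
Section Sc.
Variable R : rcfType.

Lemma cs_aux (U n p : R) : 0 <= n ->
  (forall k, 0 <= U - 2 * k * p + k ^+ 2 * n) -> p ^+ 2 <= U * n.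
Proof.
move=> n0 H.
have [np|] := ltrP 0 n.
  have := H (p / n).
  have -> : U - 2 * (p / n) * p + (p / n) ^+ 2 * n = (U * n - p ^+ 2) / n.
    by field; rewrite gt_eqF.
  by rewrite pmulr_lge0 ?invr_gt0 // subr_ge0.
move=> nle; have n00 : n = 0 by apply/eqP; rewrite eq_le nle n0.
subst n; rewrite mulr0.
have [->|pn0] := eqVneq p 0; first by rewrite expr0n.
have := H ((U + 1) / (2 * p)).
have -> : U - 2 * ((U + 1) / (2 * p)) * p + ((U + 1) / (2 * p)) ^+ 2 * 0 = -1.
  by field; rewrite pn0.
by move=> h; have : (0:R) < 1 by []; lra.
Qed.

Lemma psd_aux (c0 c1 U V p t : R) : 0 < c0 -> 0 <= 2 * c0 * c1 - 4 * V ->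
  p ^+ 2 <= V * U -> 0 <= U -> 0 <= V ->
  0 <= c0 * U - 4 * t * p + 2 * c1 * t ^+ 2.
Proof.
move=> c0p K CS U0 V0.
suff : 0 <= c0 * (c0 * U - 4 * t * p + 2 * c1 * t ^+ 2).
  by rewrite pmulr_rge0.
have Y : 0 <= c0 ^+ 2 * U - 4 * c0 * t * p + 4 * V * t ^+ 2.
  have [Vp|] := ltrP 0 V.
    suff : 0 <= V * (c0 ^+ 2 * U - 4 * c0 * t * p + 4 * V * t ^+ 2).
      by rewrite pmulr_rge0.
    have -> : V * (c0 ^+ 2 * U - 4 * c0 * t * p + 4 * V * t ^+ 2) =
       (2 * V * t - c0 * p) ^+ 2 + c0 ^+ 2 * (V * U - p ^+ 2) by ring.
    by rewrite addr_ge0 ?sqr_ge0 // mulr_ge0 ?sqr_ge0 // subr_ge0.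
  move=> Vle; have V00 : V = 0 by apply/eqP; rewrite eq_le Vle V0.
  subst V; move: CS; rewrite mul0r => CS.
  have p0 : p = 0.
    by apply/eqP; rewrite -sqrf_eq0 eq_le CS sqr_ge0.
  subst p; rewrite !(mulr0, mul0r, subr0, addr0); by rewrite mulr_ge0 ?sqr_ge0.
have -> : c0 * (c0 * U - 4 * t * p + 2 * c1 * t ^+ 2) =
   (c0 ^+ 2 * U - 4 * c0 * t * p + 4 * V * t ^+ 2) + (2 * c0 * c1 - 4 * V) * t ^+ 2 by ring.
by rewrite addr_ge0 // mulr_ge0 // sqr_ge0.
Qed.

Lemma sup_aux (m qA qB : R) : 0 < qA ->
  (forall mu, m < mu -> `|qB| <= mu * qA) -> `|qB| <= m * qA.
Proof.
move=> qA0 H; rewrite leNgt; apply/negP => hlt.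
have := H ((m + `|qB| / qA) / 2).
have hm : m < `|qB| / qA by rewrite ltr_pdivlMr.
have -> : (m + `|qB| / qA) / 2 * qA = (m * qA + `|qB|) / 2 by field; rewrite gt_eqF.
have : m < (m + `|qB| / qA) / 2 by lra.
move=> /[swap] /[apply]; lra.
Qed.

End Sc.

Lemma quad_fact (F : fieldType) (a0 a1 b0 b1 aa ab bb s x : F) :
  let den := 4 * aa - 2 * a0 * a1 in
  let P := - 4 * ab + (b1 * a0 + b0 * a1) in
  den != 0 ->
  s ^+ 2 = (4 * ab - (b1 * a0 + b0 * a1)) ^+ 2
     - 4 * (2 * aa - a0 * a1) * (2 * bb - b0 * b1) ->
  2 * (b0 - x * a0) * (b1 - x * a1) - 4 * (bb - 2 * x * ab + x ^+ 2 * aa) =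
  - den * (x + (P + s) / den) * (x + (P - s) / den).
Proof.
move=> den P hden hs.
have -> : - den * (x + (P + s) / den) * (x + (P - s) / den) =
   - ((den * x + P) ^+ 2 - s ^+ 2) / den by field.
rewrite hs /den /P; field.
by [].
Qed.

Section Real.
Variable R : rcfType.

Lemma dotvK n (u v : 'cV[R]_n) : dotv u v = dotK u v.
Proof. by rewrite /dotv /dotK mxE; apply: eq_bigr => i _; rewrite mxE. Qed.

Lemma dotK_ge0 n (u : 'cV[R]_n) : 0 <= dotK u u.
Proof.
rewrite /dotK mxE; apply: sumr_ge0 => i _; rewrite mxE -expr2; exact: sqr_ge0.
Qed.

Lemma dotK_CS n (a u : 'cV[R]_n) : dotK a u ^+ 2 <= dotK a a * dotK u u.
Proof.
rewrite mulrC; apply: cs_aux; first exact: dotK_ge0.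
move=> k; rewrite -(dotK_expand a u k); exact: dotK_ge0.
Qed.

Lemma dotK_col n (u : 'cV[R]_n) (t : 'cV[R]_1) :
  dotK (col_mx u t) (col_mx u t) = dotK u u + t 0 0 ^+ 2.
Proof.
rewrite /dotK tr_col_mx mul_row_col mxDE mxcol_row_mul [t^T 0 0]mxE expr2 //.
Qed.

Lemma nz_of_dot n (z : 'cV[R]_n) : 0 < dotK z z -> z != 0.
Proof.
apply: contraTneq => ->; rewrite /dotK mulmx0 mxE ltxx //.
Qed.

Lemma blockM_K d c0 c1 (v : 'cV[R]_d) : blockM c0 c1 v = blockK c0 c1 v.
Proof. by []. Qed.

Lemma qform_blockK d c0 c1 (v u : 'cV[R]_d) (t : 'cV[R]_1) :
  qform (blockK c0 c1 v) (col_mx u t) =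
  c0 * dotK u u - 4 * t 0 0 * dotK v u + 2 * c1 * t 0 0 ^+ 2.
Proof.
rewrite /qform blockK_gen qform_genblock; ring.
Qed.

Lemma eigvec d (hd : (2 <= d)%N) c0 c1 (v : 'cV[R]_d) :
  (c0 = 0 \/ 2 * c0 * c1 - 4 * dotK v v = 0) ->
  exists2 u : 'rV[R]_(d + 1), u != 0 & u *m blockK c0 c1 v = 0.
Proof.
move=> h; have [c00|c0n] := eqVneq c0 0.
  have : kermx v != 0.
    rewrite kermx_eq0 /row_free; apply/negP => /eqP h'.
    have := rank_leq_col v; rewrite h' => h1.
    by move: (leq_trans hd h1).
  case/rowV0Pn => w /sub_kermxP wv wn0.
  exists (row_mx w 0); first by rewrite row_mx_eq0 negb_and wn0.
  rewrite row_blockK wv c00 !mxE !(mulr0, scale0r, subr0, addr0, mul0r).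
  by rewrite raddf0 row_mx0.
have hq : 2 * c0 * c1 - 4 * dotK v v = 0.
  by case: h => // h; rewrite h eqxx in c0n.
exists (row_mx (2 *: v^T) (c0%:M)).
  rewrite row_mx_eq0 negb_and; apply/orP; right.
  by apply/negP => /eqP/matrixP/(_ 0 0); rewrite !mxE /= mulr1n; apply/eqP.
rewrite row_blockK [c0%:M 0 0]mxE eqxx mulr1n scalerA -scalemxAl mxZE.
have -> : c0 * 2 = 2 * c0 by ring.
rewrite subrr.
have -> : - 2 * (2 * (v^T *m v) 0 0) + 2 * c1 * c0 = 2 * c0 * c1 - 4 * dotK v v.
  rewrite /dotK; ring.
by rewrite hq raddf0 row_mx0.
Qed.

Lemma posdef_unit n (S : 'M[R]_n) : posdef S -> S \in unitmx.
Proof.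
case=> _ hp; rewrite -row_free_unit -kermx_eq0; apply/idPn.
case/rowV0Pn => v /sub_kermxP vS vn0.
have := hp v^T; rewrite trmx_eq0 => /(_ vn0).
by rewrite /qform trmxK vS mul0mx mxE ltxx.
Qed.

End Real.

Section Sq.
Variable R : rcfType.

Lemma sqrt_scalars (a0 a1 n x s t : R) :
  t != 0 -> t * x + a0 + s != 0 ->
  a0 = x ^+ 2 -> t ^+ 2 = a0 + 2 * a1 + 2 * s -> s ^+ 2 = 2 * a0 * a1 - 4 * n ->
  let y := - 4 / (t * (t * x + a0 + s)) in
  let z := - 2 / t in
  let w := (2 * a1 + s) / t in
  [/\ 2 * x * y + y * y * n + z * z = 0,
      z * (x + y * n + w) = -2,
      z * z * n + w * w = 2 * a1 &
      forall U p t0, t * (x * U + y * p ^+ 2 + 2 * z * t0 * p + w * t0 ^+ 2) =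
        (a0 * U - 4 * t0 * p + 2 * a1 * t0 ^+ 2) + s * (U + t0 ^+ 2)
        + t * (- y) * (n * U - p ^+ 2)].
Proof.
move=> ht hD ha0 ht2 hs2 y z w.
have ha1 : a1 = (t ^+ 2 - x ^+ 2 - 2 * s) / 2 by rewrite ht2 ha0; field.
have hn : n = (2 * a0 * a1 - s ^+ 2) / 4 by rewrite hs2; field.
rewrite /y /z /w; rewrite hn; rewrite ha1; rewrite ha0 in hD *.
split; [field; by rewrite hD ht | field; by rewrite hD ht | field; by rewrite ht | ].
move=> U p t0; field; by rewrite hD ht.
Qed.


Lemma spd_sqrt_ex d (a0 a1 : R) (a : 'cV[R]_d) :
  0 < a0 -> 0 < 2 * a0 * a1 - 4 * dotK a a -> posdef (blockM a0 a1 a) ->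
  exists S, is_spd_sqrt (blockM a0 a1 a) S.
Proof.
move=> ha0 hdel [_ hPD].
have n0 := dotK_ge0 a.
set n := dotK a a in hdel n0 *.
have ha1 : 0 < a1 by nra.
set s := Num.sqrt (2 * a0 * a1 - 4 * n).
set x := Num.sqrt a0.
have s0 : 0 < s by rewrite sqrtr_gt0.
have x0 : 0 < x by rewrite sqrtr_gt0.
set t := Num.sqrt (a0 + 2 * a1 + 2 * s).
have t0 : 0 < t by rewrite sqrtr_gt0; lra.
have hD : 0 < t * x + a0 + s by nra.
have hx2 : a0 = x ^+ 2 by rewrite sqr_sqrtr // ltW.
have ht2 : t ^+ 2 = a0 + 2 * a1 + 2 * s by rewrite sqr_sqrtr //; lra.
have hs2 : s ^+ 2 = 2 * a0 * a1 - 4 * n by rewrite sqr_sqrtr // ltW.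
have [e1 e2 e3 e4] := sqrt_scalars (negbT (gt_eqF t0)) (negbT (gt_eqF hD)) hx2 ht2 hs2.
set y := - 4 / (t * (t * x + a0 + s)) in e1 e2 e3 e4.
set z := - 2 / t in e1 e2 e3 e4.
set w := (2 * a1 + s) / t in e1 e2 e3 e4.
have y0 : 0 < - y by rewrite /y mulNr opprK divr_gt0 // mulr_gt0.
exists (genblock x y z w a); split; last first.
  rewrite genblock_sq blockM_K blockK_gen -/n e1 e2 e3.
  by rewrite -expr2 -hx2.
split; first exact: tr_genblock.
move=> z0; rewrite -(vsubmxK z0) => nz.
have hA := hPD _ nz.
move: hA; rewrite /qform blockM_K -/(qform _ _) qform_blockK /qform qform_genblock.
set U := dotK _ _; set p := dotK a _; set tt := (dsubmx z0) 0 0 => hA.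
have hU : 0 <= U := dotK_ge0 _.
have hCS : p ^+ 2 <= n * U := dotK_CS _ _.
suff : 0 < t * (x * U + y * p ^+ 2 + 2 * z * tt * p + w * tt ^+ 2).
  by rewrite pmulr_rgt0.
rewrite e4.
have : 0 <= s * (U + tt ^+ 2) by rewrite mulr_ge0 ?addr_ge0 ?sqr_ge0 // ltW.
have : 0 <= t * - y * (n * U - p ^+ 2) by rewrite !mulr_ge0 ?subr_ge0 // ltW.
lra.
Qed.

End Sq.

Lemma eig_cond (F : fieldType) d c0 c1 (v : 'cV[F]_d) (u : 'rV[F]_(d + 1)) :
  u != 0 -> u *m blockK c0 c1 v = 0 ->
  c0 = 0 \/ 2 * c0 * c1 - 4 * dotK v v = 0.
Proof.
rewrite -(hsubmxK u) row_blockK => un0 /eqP; rewrite row_mx_eq0 => /andP[/eqP hX /eqP hY].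
set w := lsubmx u in un0 hX hY; set t := rsubmx u in un0 hX hY.
have hY' : - 2 * (w *m v) 0 0 + 2 * c1 * t 0 0 = 0.
  by move/matrixP: hY => /(_ 0 0); rewrite !mxE eqxx mulr1n.
have hX' : c0 *: w = (2 * t 0 0) *: v^T by apply/eqP; rewrite -subr_eq0 hX.
have [->|c0n] := eqVneq c0 0; [by left | right].
have hw : c0 * (w *m v) 0 0 = 2 * t 0 0 * dotK v v.
  by rewrite -mxZE scalemxAl hX' -scalemxAl mxZE.
have h0 : c0 * (- 2 * (w *m v) 0 0 + 2 * c1 * t 0 0) = 0 by rewrite hY' mulr0.
have ht : t 0 0 * (2 * c0 * c1 - 4 * dotK v v) = 0.
  rewrite -h0.
  have -> : c0 * (- 2 * (w *m v) 0 0 + 2 * c1 * t 0 0) =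
     - 2 * (c0 * (w *m v) 0 0) + 2 * c1 * c0 * t 0 0 by ring.
  rewrite hw; ring.
move: ht => /eqP; rewrite mulf_eq0 => /orP[/eqP t00|/eqP //].
have w0 : w = 0.
  have : c0 *: w == 0 by rewrite hX' t00 mulr0 scale0r.
  by rewrite scalemx_eq0 (negbTE c0n) => /eqP.
have tz : t = 0 by rewrite [t]mx11_scalar t00 raddf0.
by move: un0; rewrite w0 tz row_mx0 eqxx.
Qed.

Section Cx.
Variable R : rcfType.
Local Open Scope complex_scope.

Lemma normC_real (x : R) : `|x%:C| = `|x|%:C.
Proof. by rewrite normc_def /= expr0n addr0 sqrtr_sqr. Qed.

Lemma dotK_map n (u v : 'cV[R]_n) :
  dotK (map_mx (real_complex R) u) (map_mx (real_complex R) v) = (dotK u v)%:C.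
Proof. by rewrite /dotK map_trmx -map_mxM mxE. Qed.

Lemma blockK_map d c0 c1 (v : 'cV[R]_d) :
  map_mx (real_complex R) (blockK c0 c1 v) =
  blockK c0%:C c1%:C (map_mx (real_complex R) v).
Proof.
rewrite /blockK map_block_mx !map_mxZ !map_scalar_mx map_trmx.
by rewrite !rmorphM !rmorphN !rmorph_nat.
Qed.

Lemma quad_fact_C (a0 a1 b0 b1 aa ab bb : R) (l : R[i]) :
  let Delta := (4 * ab - (b1 * a0 + b0 * a1)) ^+ 2
     - 4 * (2 * aa - a0 * a1) * (2 * bb - b0 * b1) in
  let den := 4 * aa - 2 * a0 * a1 in
  let lp := ((- 4 * ab + (b1 * a0 + b0 * a1)) + Num.sqrt Delta) / den in
  let lm := ((- 4 * ab + (b1 * a0 + b0 * a1)) - Num.sqrt Delta) / den in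
  den != 0 -> 0 <= Delta ->
  2 * (b0%:C - l * a0%:C) * (b1%:C - l * a1%:C)
   - 4 * (bb%:C - 2 * l * ab%:C + l ^+ 2 * aa%:C) =
  - den%:C * (l + lp%:C) * (l + lm%:C).
Proof.
move=> Delta den lp lm hden hD.
rewrite /lp /lm /den !(rmorph_nat, rmorphB, rmorphD, rmorphM, rmorphN, fmorph_div, fmorphV).
apply: quad_fact.
  have -> : 4 * aa%:C - 2 * a0%:C * a1%:C = den%:C.
    by rewrite /den !(rmorph_nat, rmorphB, rmorphM).
  apply/eqP => h; move/eqP: hden; apply; apply: complexI; rewrite h; by [].
transitivity ((Num.sqrt Delta ^+ 2)%:C); first by rewrite rmorphXn.
rewrite sqr_sqrtr // /Delta.
by rewrite !(rmorph_nat, rmorphB, rmorphD, rmorphM, rmorphN, rmorphXn).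
Qed.

End Cx.

Lemma dot_const (R : rcfType) d : dotK (const_mx 1 : 'cV[R]_d) (const_mx 1) = d%:R.
Proof.
rewrite /dotK mxE (eq_bigr (fun=> 1)) ?sumr_const ?card_ord // => i _.
by rewrite !mxE mulr1.
Qed.

Lemma qform_row (R : rcfType) n (M : 'M[R]_n) (u : 'rV[R]_n) :
  qform M u^T = (u *m M *m u^T) 0 0.
Proof. by rewrite /qform trmxK. Qed.

Unset Implicit Arguments. Set Strict Implicit. Set Printing Implicit Defensive.

Theorem mainTheorem1 (R : rcfType) (d : nat) (hd : (2 <= d)%N)
  (alpha0 alpha1 beta0 beta1 : R) (a b : 'cV[R]_d) :
  posdef (blockM alpha0 alpha1 a) ->
  let A := blockM alpha0 alpha1 a in
  let B := blockM beta0 beta1 b in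
  let Delta := (4 * dotv a b - (beta1 * alpha0 + beta0 * alpha1)) ^+ 2
     - 4 * (2 * dotv a a - alpha0 * alpha1) * (2 * dotv b b - beta0 * beta1) in
  let den := 4 * dotv a a - 2 * alpha0 * alpha1 in
  let lp := ((- 4 * dotv a b + (beta1 * alpha0 + beta0 * alpha1))
              + Num.sqrt Delta) / den in
  let lm := ((- 4 * dotv a b + (beta1 * alpha0 + beta0 * alpha1))
              - Num.sqrt Delta) / den in
  let m := Num.max (`|beta0| / alpha0) (Num.max `|lp| `|lm|) in
  [/\ 0 <= Delta, den != 0,
      is_max_ratio A B m,
      exists S, is_spd_sqrt A S &
      forall S, is_spd_sqrt A S ->
        is_spectral_radius (invmx S *m B *m invmx S) m].
Proof.
rewrite !dotvK => hPD.
set n := dotK a a; set ab := dotK a b; set bb := dotK b b.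
move=> A B Delta den lp lm m.
have hn0 : 0 <= n := dotK_ge0 a.
have qA : forall u t, qform A (col_mx u t) =
    alpha0 * dotK u u - 4 * t 0 0 * dotK a u + 2 * alpha1 * t 0 0 ^+ 2.
  by move=> u t; rewrite /A blockM_K qform_blockK.
have qB : forall u t, qform B (col_mx u t) =
    beta0 * dotK u u - 4 * t 0 0 * dotK b u + 2 * beta1 * t 0 0 ^+ 2.
  by move=> u t; rewrite /B blockM_K qform_blockK.
case: (hPD) => hAT hApd.
have ha0 : 0 < alpha0.
  have nz : col_mx (const_mx 1 : 'cV[R]_d) (0 : 'cV[R]_1) != 0.
    apply: nz_of_dot; rewrite dotK_col dot_const mxE expr0n addr0 ltr0n.
    by apply: leq_trans hd.
  have := hApd _ nz; rewrite qA dot_const mxE.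
  rewrite !(mulr0, mul0r, subr0, addr0, expr0n) /=.
  by rewrite pmulr_lgt0 // ltr0n; apply: leq_trans hd.
have hdel : 0 < 2 * alpha0 * alpha1 - 4 * n.
  have nz : col_mx (2 *: a) (alpha0%:M : 'cV[R]_1) != 0.
    apply: nz_of_dot; rewrite dotK_col mxE eqxx mulr1n dotKZl dotKZr.
    have : 0 < alpha0 ^+ 2 by rewrite exprn_gt0.
    rewrite -/n; nra.
  have := hApd _ nz; rewrite qA mxE eqxx mulr1n dotKZl dotKZr -/n.
  have -> : alpha0 * (2 * (2 * n)) - 4 * alpha0 * (2 * n) + 2 * alpha1 * alpha0 ^+ 2
     = alpha0 * (2 * alpha0 * alpha1 - 4 * n) by ring.
  by rewrite pmulr_rgt0.
have hden : den != 0 by rewrite /den; apply/eqP; lra.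
have hden0 : 0 < - den by rewrite /den; lra.
have hDelta : 0 <= Delta.
  set l0 := beta0 / alpha0.
  have hW : 0 <= bb - 2 * l0 * ab + l0 ^+ 2 * n.
    rewrite /bb /ab /n -dotK_expand; exact: dotK_ge0.
  have hb0 : beta0 = l0 * alpha0 by rewrite /l0 divfK // gt_eqF.
  have e : 4 * Delta = (2 * (2 * alpha0 * alpha1 - 4 * n) * l0 + 8 * ab
      - 2 * (beta1 * alpha0 + beta0 * alpha1)) ^+ 2
      + 16 * (2 * alpha0 * alpha1 - 4 * n) * (bb - 2 * l0 * ab + l0 ^+ 2 * n).
    rewrite /Delta hb0; ring.
  have : 0 <= 4 * Delta.
    by rewrite e addr_ge0 ?sqr_ge0 // !mulr_ge0 // ltW.
  lra.
have hq : forall x : R, 2 * (beta0 - x * alpha0) * (beta1 - x * alpha1)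
    - 4 * (bb - 2 * x * ab + x ^+ 2 * n) = - den * (x + lp) * (x + lm).
  move=> x; apply: quad_fact => //; rewrite sqr_sqrtr //.
have hmb : `|beta0| / alpha0 <= m by rewrite /m le_max lexx.
have hmp : `|lp| <= m by rewrite /m !le_max lexx orbT.
have hmm : `|lm| <= m by rewrite /m !le_max lexx !orbT.
have nb : - `|beta0| <= beta0 <= `|beta0| by rewrite -ler_norml.
have hmb' : `|beta0| <= m * alpha0 by rewrite -ler_pdivrMr.
have nlp : - `|lp| <= lp <= `|lp| by rewrite -ler_norml.
have nlm : - `|lm| <= lm <= `|lm| by rewrite -ler_norml.
have hup : forall z, z != 0 -> `|qform B z| <= m * qform A z.
  move=> z nz; have hAz := hApd _ nz.
  rewrite -(vsubmxK z) in hAz *.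
  set u := usubmx z in hAz *; set t := dsubmx z in hAz *.
  rewrite qA in hAz; rewrite qA qB.
  have hU := dotK_ge0 u.
  have key : forall (c0 c1 : R) (v : 'cV_d) (p : R), 0 < c0 ->
      0 <= 2 * c0 * c1 - 4 * dotK v v -> p ^+ 2 = dotK v u ^+ 2 ->
      0 <= c0 * dotK u u - 4 * t 0 0 * p + 2 * c1 * t 0 0 ^+ 2.
    move=> c0 c1 v p c0p hK hp; apply: (psd_aux (V := dotK v v)) => //; last exact: dotK_ge0.
    by rewrite hp; exact: dotK_CS.
  apply: sup_aux => // mu hmu.
  have hmu0 : 0 < (mu - m) * alpha0 by rewrite mulr_gt0 // subr_gt0.
  rewrite ler_norml; apply/andP; split.
    have := key (mu * alpha0 + beta0) (mu * alpha1 + beta1) (b - (- mu) *: a)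
       (mu * dotK a u + dotK b u).
    have e1 : dotK (b - (- mu) *: a) u = mu * dotK a u + dotK b u.
      rewrite dotKDl dotKNl dotKZl; ring.
    have e2 : 2 * (mu * alpha0 + beta0) * (mu * alpha1 + beta1)
        - 4 * dotK (b - (- mu) *: a) (b - (- mu) *: a) = - den * (mu - lp) * (mu - lm).
      have := hq (- mu); rewrite dotK_expand -/n -/ab -/bb => h.
      transitivity (- den * (- mu + lp) * (- mu + lm)); last by ring.
      rewrite -h; ring.
    rewrite e1 e2 => /(_ _ _ erefl).
    have : 0 <= - den * (mu - lp) * (mu - lm).
      by rewrite !mulr_ge0 // ?ltW //; lra.
    move=> h1 h2; have := h2 ltac:(lra) h1; nra.
  have := key (mu * alpha0 - beta0) (mu * alpha1 - beta1) (b - mu *: a)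
     (mu * dotK a u - dotK b u).
  have e1 : dotK (b - mu *: a) u = - (mu * dotK a u - dotK b u).
    rewrite dotKDl dotKNl dotKZl; ring.
  have e2 : 2 * (mu * alpha0 - beta0) * (mu * alpha1 - beta1)
      - 4 * dotK (b - mu *: a) (b - mu *: a) = - den * (mu + lp) * (mu + lm).
    rewrite -hq dotK_expand -/n -/ab -/bb; ring.
  rewrite e1 e2 sqrrN => /(_ _ _ erefl).
  have : 0 <= - den * (mu + lp) * (mu + lm).
    by rewrite !mulr_ge0 // ?ltW //; lra.
  move=> h1 h2; have := h2 ltac:(lra) h1; nra.
have hroot : exists r : R, `|r| = m /\ (beta0 - r * alpha0 = 0 \/
    2 * (beta0 - r * alpha0) * (beta1 - r * alpha1)
    - 4 * dotK (b - r *: a) (b - r *: a) = 0).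
  have qz : forall r, - den * (r + lp) * (r + lm) = 0 ->
      2 * (beta0 - r * alpha0) * (beta1 - r * alpha1)
      - 4 * dotK (b - r *: a) (b - r *: a) = 0.
    by move=> r h; rewrite dotK_expand -/n -/ab -/bb hq.
  case: (leP (`|beta0| / alpha0) (Num.max `|lp| `|lm|)) => h1.
    case: (leP `|lp| `|lm|) => h2.
      exists (- lm); split; first by rewrite normrN /m (max_r h1) (max_r h2).
      by right; apply: qz; rewrite addNr mulr0.
    exists (- lp); split; first by rewrite normrN /m (max_r h1) (max_l (ltW h2)).
    by right; apply: qz; rewrite addNr mulr0 mul0r.
  exists (beta0 / alpha0); split.
    by rewrite /m (max_l (ltW h1)) normrM normfV (gtr0_norm ha0).
  by left; rewrite divfK ?subrr // gt_eqF.
have heig : forall r, (beta0 - r * alpha0 = 0 \/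
    2 * (beta0 - r * alpha0) * (beta1 - r * alpha1)
    - 4 * dotK (b - r *: a) (b - r *: a) = 0) ->
    exists2 u : 'rV[R]_(d + 1), u != 0 & u *m B = r *: (u *m A).
  move=> r hc; have [u un hu] := eigvec hd hc; exists u => //.
  apply/eqP; rewrite -subr_eq0 scalemxAr -mulmxBr.
  by rewrite /A /B !blockM_K blockK_lin hu.
have [r [hr hrc]] := hroot.
have [u un hu] := heig r hrc.
have hSex : exists S, is_spd_sqrt A S.
  by apply: spd_sqrt_ex.
split => //.
  split.
    exists u^T; first by rewrite trmx_eq0.
    have hAu := hApd u^T; rewrite trmx_eq0 in hAu; have {}hAu := hAu un.
    rewrite !qform_row in hAu *; rewrite hu -scalemxAl mxZE normrM (gtr0_norm hAu).
    by rewrite mulfK ?gt_eqF.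
  move=> z nz; rewrite ler_pdivrMr; [exact: hup | exact: hApd].
move=> S [hSpd hSS]; have hSu := posdef_unit hSpd.
rewrite /is_spectral_radius.
set MC := map_mx (real_complex R) (invmx S *m B *m invmx S).
change ((exists2 l : R[i], eigenvalue MC l & `|l| = (m%:C)%C) /\
  (forall l : R[i], eigenvalue MC l -> `|l| <= (m%:C)%C)).
have eMC : MC = map_mx (real_complex R) (invmx S *m B *m invmx S) by [].
split.
  exists (r%:C)%C; last by rewrite normC_real hr.
  apply/eigenvalueP; exists (map_mx (real_complex R) (u *m S)).
    rewrite eMC -map_mxM -map_mxZ; congr map_mx.
    rewrite !mulmxA mulmxK // hu -hSS -scalemxAl !mulmxA mulmxK //.
  by rewrite map_mx_eq0 mulmx_free_eq0 ?row_free_unit.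
move=> l /eigenvalueP [vC hv vn0].
have hSCu : map_mx (real_complex R) S \in unitmx by rewrite map_unitmx.
set SC := map_mx (real_complex R) S in hSCu.
set BC := map_mx (real_complex R) B.
set AC := map_mx (real_complex R) A.
have hAC : AC = SC *m SC by rewrite /AC /SC -map_mxM hSS.
move: hv; rewrite eMC !map_mxM map_invmx -/SC -/BC !mulmxA => hv.
set uC := vC *m invmx SC in hv.
have uCn : uC != 0 by rewrite mulmx_free_eq0 ?row_free_unit ?unitmx_inv.
have hvu : vC = uC *m SC by rewrite /uC mulmxKV.
have huB : uC *m BC = l *: (uC *m AC).
  have : uC *m BC *m invmx SC *m SC = l *: vC *m SC by rewrite hv.
  rewrite mulmxKV // => ->.
  by rewrite -scalemxAl hvu hAC !mulmxA.
have hBl : BC - l *: AC = blockK ((beta0%:C)%C - l * (alpha0%:C)%C)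
    ((beta1%:C)%C - l * (alpha1%:C)%C)
    (map_mx (real_complex R) b - l *: map_mx (real_complex R) a).
  by rewrite /BC /AC /A /B !blockM_K !blockK_map blockK_lin.
have hz : uC *m blockK ((beta0%:C)%C - l * (alpha0%:C)%C)
    ((beta1%:C)%C - l * (alpha1%:C)%C)
    (map_mx (real_complex R) b - l *: map_mx (real_complex R) a) = 0.
  by rewrite -hBl mulmxBr huB -scalemxAr subrr.
have ha0C : (alpha0%:C)%C != 0 :> R[i].
  by apply/eqP => h; move: ha0; rewrite -(complexI (h : _ = (0%:C)%C)) ltxx.
case: (eig_cond uCn hz) => [h0|hq0].
  move/eqP: h0; rewrite subr_eq0 => /eqP h0.
  have e1 : ((beta0 / alpha0)%:C)%C * (alpha0%:C)%C = (beta0%:C)%C.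
    by rewrite -rmorphM divfK // gt_eqF.
  have el : l = ((beta0 / alpha0)%:C)%C by apply: (mulIf ha0C); rewrite e1 h0.
  by rewrite el normC_real lecR normrM normfV (gtr0_norm ha0).
have hfac : forall x : R[i],
   2 * ((beta0%:C)%C - x * (alpha0%:C)%C) * ((beta1%:C)%C - x * (alpha1%:C)%C)
   - 4 * ((bb%:C)%C - 2 * x * (ab%:C)%C + x ^+ 2 * (n%:C)%C) =
   - (den%:C)%C * (x + (lp%:C)%C) * (x + (lm%:C)%C).
  by move=> x; apply: quad_fact_C.
move: hq0; rewrite dotK_expand !dotK_map -/n -/ab -/bb hfac.
have hdenC : (den%:C)%C != 0 :> R[i].
  by apply/eqP => h; move/eqP: hden; apply; apply: complexI; rewrite h.
move/eqP; rewrite !mulf_eq0 oppr_eq0 (negbTE hdenC) /= => /orP[] /eqP h.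
  have -> : l = - (lp%:C)%C by apply/eqP; rewrite -subr_eq0 opprK h.
  by rewrite normrN normC_real lecR.
have -> : l = - (lm%:C)%C by apply/eqP; rewrite -subr_eq0 opprK h.
by rewrite normrN normC_real lecR.
Qed.
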